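(* Let $I:\mathcal{G}\to\mathcal{V}$ be a morphism of rings with several objects such that the induced adjoint pair $(I^*,I_* )$, $I^*:\mathrm{Mod}(\mathcal{G})\to\mathrm{Mod}(\mathcal{V})$, $I_*:\mathrm{Mod}(\mathcal{V})\to\mathrm{Mod}(\mathcal{G})$, is a localization (i.e. $I^*$ is exact and $I_*$ is fully faithful). Then $I^*$ and $I_*$ are mutually inverse equivalences of categories if and only if $\mathcal{G}(-,G)$ is a $\operatorname{Ker} I^*$-closed $\mathcal{G}$-module for all $G\in\mathcal{G}$.
   Context: All categories are preadditive and all functors are additive. A ring with several objects is a small preadditive category. $\mathrm{Mod}(\mathcal{G})$ is the category of additive functors $\mathcal{G}^{op}\to\mathrm{Ab}$. $I_*Y=Y\circ I$ is the restriction functor and $I^*$ is its left adjoint, the colimit-preserving functor with $I^*\mathcal{G}(-,G)=\mathcal{V}(-,IG)$. $\operatorname{Ker} I^*$ is the full subcategory of modules annihilated by $I^*$ (a localizing subcategory, since $I^*$ is exact and colimit-preserving). For a localizing subcategory $\mathcal{L}$, a module $X$ is $\mathcal{L}$-closed if $\mathrm{Hom}(L,X)=0=\mathrm{Ext}^1(L,X)$ for all $L\in\mathcal{L}$. *)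

(* Defs.v *)
From HB Require Import structures.
From mathcomp Require Import all_boot all_algebra.
Unset Implicit Arguments.
Unset Strict Implicit.
Unset Printing Implicit Defensive.
Import GRing.Theory.
Local Open Scope ring_scope.

(* A ring with several objects: a small preadditive category.
   [pcomp g f] is the composite g o f. *)
Record PreaddCat := {
  pobj : Type;
  phom : pobj -> pobj -> zmodType;
  pcomp : forall a b c : pobj, phom b c -> phom a b -> phom a c;
  pid : forall a : pobj, phom a a;
  pcompDl : forall a b c (g g' : phom b c) (f : phom a b),
      pcomp a b c (g + g') f = pcomp a b c g f + pcomp a b c g' f;
  pcompDr : forall a b c (g : phom b c) (f f' : phom a b),
      pcomp a b c g (f + f') = pcomp a b c g f + pcomp a b c g f';
  pcompA : forall a b c d (h : phom c d) (g : phom b c) (f : phom a b),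
      pcomp a c d h (pcomp a b c g f) = pcomp a b d (pcomp b c d h g) f;
  pcomp1l : forall a b (f : phom a b), pcomp a b b (pid b) f = f;
  pcomp1r : forall a b (f : phom a b), pcomp a a b f (pid a) = f
}.

Record AddFunctor (G V : PreaddCat) := {
  fobj : pobj G -> pobj V;
  fmap : forall a b, phom G a b -> phom V (fobj a) (fobj b);
  fmapD : forall a b (f f' : phom G a b), fmap a b (f + f') = fmap a b f + fmap a b f';
  fmap1 : forall a, fmap a a (pid G a) = pid V (fobj a);
  fmapM : forall a b c (g : phom G b c) (f : phom G a b),
      fmap a c (pcomp G a b c g f) = pcomp V _ _ _ (fmap b c g) (fmap a b f)
}.
Arguments fmap {G V} _ {a b}.
Arguments fobj {G V} _ _.

(* A G-module: an additive functor G^op -> Ab.  [mact f] is X(f) : X b -> X a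
   for f : a -> b. *)
Record Module (G : PreaddCat) := {
  mcar : pobj G -> zmodType;
  mact : forall a b : pobj G, phom G a b -> mcar b -> mcar a;
  mactDf : forall a b (f f' : phom G a b) (x : mcar b),
      mact a b (f + f') x = mact a b f x + mact a b f' x;
  mactD : forall a b (f : phom G a b) (x y : mcar b),
      mact a b f (x + y) = mact a b f x + mact a b f y;
  mact1 : forall a (x : mcar a), mact a a (pid G a) x = x;
  mactM : forall a b c (f : phom G a b) (g : phom G b c) (x : mcar c),
      mact a c (pcomp G a b c g f) x = mact a b f (mact b c g x)
}.
Arguments mcar {G} _ _.
Arguments mact {G} _ {a b} _ _.

Record ModMor (G : PreaddCat) (M N : Module G) := {
  mmap : forall a, mcar M a -> mcar N a;
  mmapD : forall a (x y : mcar M a), mmap a (x + y) = mmap a x + mmap a y;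
  mmapN : forall a b (f : phom G a b) (x : mcar M b),
      mmap a (mact M f x) = mact N f (mmap b x)
}.
Arguments mmap {G M N} _ _ _.
Arguments ModMor {G} _ _.
Set Implicit Arguments.

Definition restr (G V : PreaddCat) (I : AddFunctor G V) (Y : Module V) : Module G.
Proof.
refine (Build_Module G (fun a => mcar Y (fobj I a))
          (fun a b f x => mact Y (fmap I f) x) _ _ _ _).
- by move=> a b f f' x /=; rewrite fmapD mactDf.
- by move=> a b f x y /=; rewrite mactD.
- by move=> a x /=; rewrite fmap1 mact1.
- by move=> a b c f g x /=; rewrite fmapM mactM.
Defined.

Definition representable (G : PreaddCat) (g : pobj G) : Module G.
Proof.
refine (Build_Module G (fun a => phom G a g)
          (fun a b f h => pcomp G a b g h f) _ _ _ _).
- by move=> a b f f' x /=; rewrite pcompDr.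
- by move=> a b f x y /=; rewrite pcompDl.
- by move=> a x /=; rewrite pcomp1r.
- by move=> a b c f h x /=; rewrite pcompA.
Defined.

Definition is_iso (G : PreaddCat) (M N : Module G) (p : ModMor M N) : Prop :=
  exists q : ModMor N M,
    (forall a x, mmap q a (mmap p a x) = x) /\
    (forall a y, mmap p a (mmap q a y) = y).

Definition short_exact (G : PreaddCat) (A B C : Module G)
    (f : ModMor A B) (g : ModMor B C) : Prop :=
  forall a,
    injective (mmap f a) /\
    (forall z : mcar C a, exists y, mmap g a y = z) /\
    (forall y : mcar B a, mmap g a y = 0 <-> exists x, mmap f a x = y).

Definition is_left_adjoint (G V : PreaddCat) (I : AddFunctor G V)
    (F : Module G -> Module V)
    (Fmap : forall M N : Module G, ModMor M N -> ModMor (F M) (F N))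
    (eta : forall M : Module G, ModMor M (restr I (F M))) : Prop :=
  (forall (M N : Module G) (f : ModMor M N) a x,
      mmap (eta N) a (mmap f a x) = mmap (Fmap M N f) (fobj I a) (mmap (eta M) a x))
  /\
  (forall (M : Module G) (Y : Module V) (phi : ModMor M (restr I Y)),
      exists psi : ModMor (F M) Y,
        (forall a x, mmap psi (fobj I a) (mmap (eta M) a x) = mmap phi a x) /\
        (forall psi' : ModMor (F M) Y,
            (forall a x, mmap psi' (fobj I a) (mmap (eta M) a x) = mmap phi a x) ->
            forall b y, mmap psi' b y = mmap psi b y)).

Definition exact_functor (G V : PreaddCat) (F : Module G -> Module V)
    (Fmap : forall M N : Module G, ModMor M N -> ModMor (F M) (F N)) : Prop :=
  forall (A B C : Module G) (f : ModMor A B) (g : ModMor B C),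
    short_exact f g -> short_exact (Fmap A B f) (Fmap B C g).

Definition restr_fully_faithful (G V : PreaddCat) (I : AddFunctor G V) : Prop :=
  forall Y Y' : Module V,
    (forall psi psi' : ModMor Y Y',
        (forall a x, mmap psi (fobj I a) x = mmap psi' (fobj I a) x) ->
        forall b y, mmap psi b y = mmap psi' b y) /\
    (forall phi : ModMor (restr I Y) (restr I Y'),
        exists psi : ModMor Y Y', forall a x, mmap psi (fobj I a) x = mmap phi a x).

(* Ker I^* : modules annihilated by F. *)
Definition in_Ker (G V : PreaddCat) (F : Module G -> Module V) (M : Module G) : Prop :=
  forall b (y : mcar (F M) b), y = 0.

(* L-closed: Hom(L, X) = 0 and Ext^1(L, X) = 0 (Yoneda Ext: every extension
   0 -> X -> E -> L -> 0 splits) for all L in the subcategory. *)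
Definition closed_wrt (G : PreaddCat) (Lsub : Module G -> Prop) (X : Module G) : Prop :=
  forall L : Module G, Lsub L ->
    (forall (phi : ModMor L X) a x, mmap phi a x = 0) /\
    (forall (E : Module G) (f : ModMor X E) (g : ModMor E L),
        short_exact f g ->
        exists s : ModMor L E, forall a x, mmap g a (mmap s a x) = x).

Definition adj_equivalence (G V : PreaddCat) (I : AddFunctor G V)
    (F : Module G -> Module V)
    (eta : forall M : Module G, ModMor M (restr I (F M))) : Prop :=
  (forall M : Module G, is_iso (eta M)) /\
  (forall Y : Module V, exists eps : ModMor (F (restr I Y)) Y,
      is_iso eps /\
      forall a y, mmap eps (fobj I a) (mmap (eta (restr I Y)) a y) = y).

Arguments restr {G V} _ _.
Arguments representable {G} _.
Arguments is_left_adjoint {G V} _ _ _ _.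
Arguments exact_functor {G V} _ _.
Arguments restr_fully_faithful {G V} _.
Arguments in_Ker {G V} _ _.
Arguments closed_wrt {G} _ _.
Arguments adj_equivalence {G V} _ _ _.

(* Main.v *)
Require Import Defs.
From HB Require Import structures.
From mathcomp Require Import all_boot all_algebra.
From Stdlib Require Import ClassicalEpsilon.
Set Implicit Arguments. Unset Strict Implicit. Unset Printing Implicit Defensive.
Import GRing.Theory.
Local Open Scope ring_scope.

Definition pb (P : Prop) : bool := if excluded_middle_informative P then true else false.
Lemma pbP (P : Prop) : reflect P (pb P).
Proof. rewrite /pb; case: excluded_middle_informative => h; constructor => //. Qed.

Record zpred (T : zmodType) := ZPred {
  zp : T -> Prop; zp0 : zp 0; zpD : forall x y, zp x -> zp y -> zp (x + y);
  zpN : forall x, zp x -> zp (- x) }.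

Section SubZ.
Variables (T : zmodType) (Z : zpred T).
Record subz := SubZ { sval_ : T; sprop : pb (zp Z sval_) }.
HB.instance Definition _ := [isSub for sval_].
HB.instance Definition _ := [Choice of subz by <:].
Definition sz0 : subz := SubZ (introT (pbP _) (zp0 Z)).
Definition szadd (x y : subz) : subz :=
  SubZ (introT (pbP _) (zpD (elimT (pbP _) (sprop x)) (elimT (pbP _) (sprop y)))).
Definition szopp (x : subz) : subz :=
  SubZ (introT (pbP _) (zpN (elimT (pbP _) (sprop x)))).
Lemma szaddA : associative szadd.
Proof. by move=> x y z; apply: val_inj; rewrite /= addrA. Qed.
Lemma szaddC : commutative szadd.
Proof. by move=> x y; apply: val_inj; rewrite /= addrC. Qed.
Lemma szadd0 : left_id sz0 szadd.
Proof. by move=> x; apply: val_inj; rewrite /= add0r. Qed.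
Lemma szaddN : left_inverse sz0 szopp szadd.
Proof. by move=> x; apply: val_inj; rewrite /= addNr. Qed.
HB.instance Definition _ := GRing.isZmodule.Build subz szaddA szaddC szadd0 szaddN.
Lemma val_szD (x y : subz) : sval_ (x + y) = sval_ x + sval_ y. Proof. by []. Qed.
Lemma val_sz0 : sval_ (0 : subz) = 0. Proof. by []. Qed.
End SubZ.

Section QuotZ.
Variables (T : zmodType) (Z : zpred T).
Definition rel (x : T) : pred T := fun y => pb (zp Z (y - x)).
Lemma rel_ex x : exists y, rel x y.
Proof. exists x; apply/pbP; rewrite subrr; exact: zp0. Qed.
Definition canon x := xchoose (rel_ex x).
Lemma canonP x : zp Z (canon x - x).
Proof. exact: (elimT (pbP _) (xchooseP (rel_ex x))). Qed.
Lemma zpB x y : zp Z x -> zp Z y -> zp Z (x - y).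
Proof. by move=> hx hy; apply: zpD => //; apply: zpN. Qed.
Lemma canon_eq x y : zp Z (x - y) -> canon x = canon y.
Proof.
move=> h; apply: eq_xchoose => z; apply/pbP/pbP => hz.
- by have := zpD hz h; rewrite subrKA.
- by have := zpB hz h; rewrite opprB subrKA.
Qed.
Lemma canon_eqP x y : canon x = canon y -> zp Z (x - y).
Proof.
move=> e; have h1 := canonP x; have h2 := canonP y.
have := zpB h2 h1; rewrite e.
by rewrite opprB addrC subrKA.
Qed.
Lemma canonK x : canon (canon x) = canon x.
Proof. apply: canon_eq; exact: canonP. Qed.
Record quotz := QuotZ { qval : T; qprop : canon qval == qval }.
HB.instance Definition _ := [isSub for qval].
HB.instance Definition _ := [Choice of quotz by <:].
Definition mkq (x : T) : quotz := QuotZ (introT eqP (canonK x)).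
Lemma mkq_val (q : quotz) : mkq (qval q) = q.
Proof. apply: val_inj => /=; exact: (eqP (qprop q)). Qed.
Lemma mkq_eq x y : zp Z (x - y) -> mkq x = mkq y.
Proof. by move=> h; apply: val_inj => /=; apply: canon_eq. Qed.
Lemma mkq_eqP x y : mkq x = mkq y -> zp Z (x - y).
Proof. move=> e; apply: canon_eqP; exact: (congr1 qval e). Qed.
Lemma mkq_canon x : mkq (canon x) = mkq x.
Proof. apply: mkq_eq; exact: canonP. Qed.
Definition qz0 := mkq 0.
Definition qzadd (x y : quotz) := mkq (qval x + qval y).
Definition qzopp (x : quotz) := mkq (- qval x).
Lemma qvalE (x : T) : qval (mkq x) = canon x. Proof. by []. Qed.
Lemma mkq_add x y : mkq (canon x + y) = mkq (x + y).
Proof. apply: mkq_eq; rewrite opprD addrACA subrr addr0; exact: canonP. Qed.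
Lemma mkq_addr x y : mkq (x + canon y) = mkq (x + y).
Proof. by rewrite addrC mkq_add addrC. Qed.
Lemma qzaddA : associative qzadd.
Proof. by move=> x y z; rewrite /qzadd !qvalE mkq_add mkq_addr addrA. Qed.
Lemma qzaddC : commutative qzadd.
Proof. by move=> x y; rewrite /qzadd addrC. Qed.
Lemma qzadd0 : left_id qz0 qzadd.
Proof. by move=> x; rewrite /qzadd /qz0 qvalE mkq_add add0r mkq_val. Qed.
Lemma qzaddN : left_inverse qz0 qzopp qzadd.
Proof.
move=> x; rewrite /qzadd /qzopp /qz0 qvalE mkq_add; apply: mkq_eq.
rewrite subr0 addNr; exact: zp0.
Qed.
HB.instance Definition _ := GRing.isZmodule.Build quotz qzaddA qzaddC qzadd0 qzaddN.
Lemma mkqD x y : mkq (x + y) = mkq x + mkq y.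
Proof. by rewrite /+%R /= /qzadd !qvalE mkq_add mkq_addr. Qed.
Lemma mkq0 : mkq 0 = 0. Proof. by []. Qed.
Lemma mkq_zero x : mkq x = 0 <-> zp Z x.
Proof. split=> [e|h]. - have := mkq_eqP (etrans e (esym mkq0)); by rewrite subr0.
- by apply: mkq_eq; rewrite subr0. Qed.
End QuotZ.

Section AddFun.
Variables (T U : zmodType) (g : T -> U) (gD : forall x y, g (x + y) = g x + g y).
Lemma addf0 : g 0 = 0.
Proof. by apply: (@addrI _ (g 0)); rewrite -gD !addr0. Qed.
Lemma addfN x : g (- x) = - g x.
Proof. by apply: (@addrI _ (g x)); rewrite -gD !subrr addf0. Qed.
Lemma addfB x y : g (x - y) = g x - g y.
Proof. by rewrite gD addfN. Qed.
End AddFun.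

Lemma mact0 G (M : Module G) a b (f : phom G a b) : mact M f 0 = 0.
Proof. exact: (@addf0 _ _ _ (mactD _ M _ _ f)). Qed.
Lemma mactB G (M : Module G) a b (f : phom G a b) x y : mact M f (x - y) = mact M f x - mact M f y.
Proof. exact: (@addfB _ _ _ (mactD _ M _ _ f)). Qed.
Lemma mactN G (M : Module G) a b (f : phom G a b) x : mact M f (- x) = - mact M f x.
Proof. exact: (@addfN _ _ _ (mactD _ M _ _ f)). Qed.
Lemma mmap0 G (M N : Module G) (p : ModMor M N) a : mmap p a 0 = 0.
Proof. exact: (@addf0 _ _ _ (mmapD _ _ _ p a)). Qed.
Lemma mmapB G (M N : Module G) (p : ModMor M N) a x y : mmap p a (x - y) = mmap p a x - mmap p a y.
Proof. exact: (@addfB _ _ _ (mmapD _ _ _ p a)). Qed.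
Lemma mmapNeg G (M N : Module G) (p : ModMor M N) a x : mmap p a (- x) = - mmap p a x.
Proof. exact: (@addfN _ _ _ (mmapD _ _ _ p a)). Qed.

Section SubMod.
Variables (G : PreaddCat) (M : Module G) (Z : forall a, zpred (mcar M a))
  (Zact : forall a b (f : phom G a b) x, zp (Z b) x -> zp (Z a) (mact M f x)).

Definition submod : Module G.
Proof.
refine (@Build_Module G (fun a => (subz (Z a) : zmodType))
  (fun a b f x => SubZ (introT (pbP _) (Zact f (elimT (pbP _) (sprop x))))) _ _ _ _).
- by move=> a b f f' x; apply: val_inj => /=; rewrite mactDf.
- by move=> a b f x y; apply: val_inj => /=; rewrite mactD.
- by move=> a x; apply: val_inj => /=; rewrite mact1.
- by move=> a b c f g x; apply: val_inj => /=; rewrite mactM.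
Defined.

Definition inclMM : ModMor submod M.
Proof. by refine (@Build_ModMor G submod M (fun a x => sval_ x) _ _). Defined.

Lemma incl_inj a : injective (mmap inclMM a).
Proof. move=> x y /= e; exact: val_inj. Qed.

Definition coresMM (N : Module G) (p : ModMor N M) (hp : forall a x, zp (Z a) (mmap p a x)) :
  ModMor N submod.
Proof.
refine (@Build_ModMor G N submod (fun a x => SubZ (introT (pbP _) (hp a x))) _ _).
- by move=> a x y; apply: val_inj => /=; rewrite mmapD.
- by move=> a b f x; apply: val_inj => /=; rewrite mmapN.
Defined.

Lemma mkq_act a b (f : phom G a b) (x : mcar M b) :
  mkq (Z a) (mact M f (canon (Z b) x)) = mkq (Z a) (mact M f x).
Proof. apply: mkq_eq; rewrite -mactB; apply: Zact; exact: canonP. Qed.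

Definition quotmod : Module G.
Proof.
refine (@Build_Module G (fun a => (quotz (Z a) : zmodType))
  (fun a b f q => mkq (Z a) (mact M f (qval q))) _ _ _ _).
- by move=> a b f f' x; rewrite mactDf mkqD.
- by move=> a b f x y; rewrite /= mkq_act mactD mkqD.
- by move=> a x; rewrite mact1 mkq_val.
- by move=> a b c f g x; rewrite /= mkq_act mactM.
Defined.

Definition projMM : ModMor M quotmod.
Proof.
refine (@Build_ModMor G M quotmod (fun a x => mkq (Z a) x) _ _).
- by move=> a x y; rewrite mkqD.
- by move=> a b f x; rewrite /= mkq_act.
Defined.

Lemma sub_quot_exact : short_exact inclMM projMM.
Proof.
move=> a; split; first exact: incl_inj.
split; first by move=> z; exists (qval z); rewrite /= mkq_val.
move=> y; split => /=.
- move/mkq_zero => h. by exists (SubZ (introT (pbP _) h)).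
- by move=> [x <-]; apply/mkq_zero; exact: (elimT (pbP _) (sprop x)).
Qed.
End SubMod.

Section Kernels.
Variables (G : PreaddCat) (M N : Module G) (p : ModMor M N).
Definition kerZ a : zpred (mcar M a).
Proof.
refine (@ZPred _ (fun x => mmap p a x = 0) _ _ _).
- exact: mmap0.
- by move=> x y hx hy; rewrite mmapD hx hy addr0.
- by move=> x hx; rewrite mmapNeg hx oppr0.
Defined.
Lemma kerAct a b (f : phom G a b) x : zp (kerZ b) x -> zp (kerZ a) (mact M f x).
Proof. by rewrite /= mmapN => ->; rewrite mact0. Qed.
Definition kermod := submod kerAct.

Definition imZ a : zpred (mcar N a).
Proof.
refine (@ZPred _ (fun y => exists x, mmap p a x = y) _ _ _).
- by exists 0; exact: mmap0.
- by move=> x y [u <-] [v <-]; exists (u + v); rewrite mmapD.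
- by move=> x [u <-]; exists (- u); rewrite mmapNeg.
Defined.
Lemma imAct a b (f : phom G a b) y : zp (imZ b) y -> zp (imZ a) (mact N f y).
Proof. by move=> [x <-]; exists (mact M f x); rewrite mmapN. Qed.
Definition immod := submod imAct.
Definition coker := quotmod imAct.

Lemma inj_coker_exact : (forall a, injective (mmap p a)) -> short_exact p (projMM imAct).
Proof.
move=> hi a; split; first exact: hi.
split; first by move=> z; exists (qval z); rewrite /= mkq_val.
move=> y; split => /=.
- by move/mkq_zero.
- by move=> h; apply/mkq_zero.
Qed.
End Kernels.

Definition idMM G (M : Module G) : ModMor M M.
Proof. by refine (@Build_ModMor G M M (fun a x => x) _ _). Defined.
Definition zeroMM G (M N : Module G) : ModMor M N.
Proof.
refine (@Build_ModMor G M N (fun a x => 0) _ _).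
- by move=> *; rewrite addr0.
- by move=> *; rewrite mact0.
Defined.
Definition compMM G (M N P : Module G) (p : ModMor M N) (q : ModMor N P) : ModMor M P.
Proof.
refine (@Build_ModMor G M P (fun a x => mmap q a (mmap p a x)) _ _).
- by move=> *; rewrite !mmapD.
- by move=> *; rewrite !mmapN.
Defined.
Definition restrMM G V (I : AddFunctor G V) (Y Y' : Module V) (p : ModMor Y Y') :
  ModMor (restr I Y) (restr I Y').
Proof.
refine (@Build_ModMor G (restr I Y) (restr I Y') (fun a x => mmap p (fobj I a) x) _ _).
- by move=> *; rewrite !mmapD.
- by move=> a b f x /=; rewrite mmapN.
Defined.

Lemma bij_iso G (M N : Module G) (p : ModMor M N) :
  (forall a, injective (mmap p a)) -> (forall a y, exists x, mmap p a x = y) -> is_iso p.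
Proof.
move=> hi hs.
pose inv a y := proj1_sig (constructive_indefinite_description _ (hs a y)).
have invK a y : mmap p a (inv a y) = y by rewrite /inv; case: constructive_indefinite_description.
have q : ModMor N M.
  refine (@Build_ModMor G N M inv _ _).
  - by move=> a x y; apply: (hi a); rewrite mmapD !invK.
  - by move=> a b f x; apply: (hi a); rewrite mmapN !invK.
exists (@Build_ModMor G N M inv
  (fun a x y => hi a _ _ (etrans (invK a (x + y)) (esym (etrans (mmapD _ _ _ p a _ _) (f_equal2 +%R (invK a x) (invK a y))))))
  (fun a b f x => hi a _ _ (etrans (invK a _) (esym (etrans (mmapN _ _ _ p a b f _) (f_equal (mact N f) (invK b x))))))).
split => a x /=; last exact: invK.
by apply: hi; rewrite invK.
Qed.


Definition yonMM G (L : Module G) a (x : mcar L a) : ModMor (representable a) L.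
Proof.
refine (@Build_ModMor G (representable a) L (fun c f => mact L f x) _ _).
- by move=> c f f'; rewrite /= mactDf.
- by move=> c b f y; rewrite /= mactM.
Defined.

Definition coresRestr G V (I : AddFunctor G V) (Y : Module V) (Z : forall b, zpred (mcar Y b))
  (Zact : forall a b (f : phom V a b) x, zp (Z b) x -> zp (Z a) (mact Y f x))
  (M : Module G) (p : ModMor M (restr I Y)) (hp : forall a x, zp (Z (fobj I a)) (mmap p a x)) :
  ModMor M (restr I (submod Zact)).
Proof.
refine (@Build_ModMor G M (restr I (submod Zact)) (fun a x => SubZ (introT (pbP _) (hp a x))) _ _).
- by move=> a x y; apply: val_inj => /=; rewrite mmapD.
- by move=> a b f x; apply: val_inj => /=; rewrite mmapN.
Defined.

Definition Szp G V (I : AddFunctor G V) a (L : Module G) (h : ModMor (representable a) L)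
  (Y : Module V) (et : ModMor (representable a) (restr I Y)) b : zpred (mcar Y b).
Proof.
refine (@ZPred _ (fun y => forall c (v : phom V (fobj I c) b), exists p : phom G c a,
     mmap h c p = 0 /\ mmap et c p = mact Y v y) _ _ _).
- by move=> c v; exists 0; rewrite !mmap0 mact0.
- move=> y1 y2 h1 h2 c v.
  have [p1 [k1 e1]] := h1 c v; have [p2 [k2 e2]] := h2 c v.
  by exists (p1 + p2); rewrite !mmapD k1 k2 e1 e2 addr0 mactD.
- move=> y1 h1 c v.
  have [p1 [k1 e1]] := h1 c v.
  by exists (- p1); rewrite !mmapNeg k1 e1 oppr0 mactN.
Defined.

Lemma Szp_act G V (I : AddFunctor G V) a (L : Module G) (h : ModMor (representable a) L)
  (Y : Module V) (et : ModMor (representable a) (restr I Y)) :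
  forall b' b (w : phom V b' b) y, zp (Szp h et b) y -> zp (Szp h et b') (mact Y w y).
Proof. move=> b' b w y hy c v; rewrite -mactM; exact: hy. Qed.

Section Main.
Variables (G V : PreaddCat) (I : AddFunctor G V)
    (F : Module G -> Module V)
    (Fmap : forall M N : Module G, ModMor M N -> ModMor (F M) (F N))
    (eta : forall M : Module G, ModMor M (restr I (F M)))
    (Hadj : is_left_adjoint I F Fmap eta)
    (Hexact : exact_functor F Fmap)
    (Hff : restr_fully_faithful I).

Lemma natF (M N : Module G) (f : ModMor M N) a x :
  mmap (Fmap f) (fobj I a) (mmap (eta M) a x) = mmap (eta N) a (mmap f a x).
Proof. by rewrite (proj1 Hadj). Qed.

Lemma uniqF (M : Module G) (Y : Module V) (p1 p2 : ModMor (F M) Y) :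
  (forall a x, mmap p1 (fobj I a) (mmap (eta M) a x) = mmap p2 (fobj I a) (mmap (eta M) a x)) ->
  forall b y, mmap p1 b y = mmap p2 b y.
Proof.
move=> h b y.
have [psi [_ hu]] := (proj2 Hadj) M Y (compMM (eta M) (restrMM I p1)).
rewrite (hu p1) // (hu p2) //.
move=> a x /=; by rewrite h.
Qed.

Lemma counit (Y : Module V) : exists (eps : ModMor (F (restr I Y)) Y) (q : ModMor Y (F (restr I Y))),
  (forall a y, mmap eps (fobj I a) (mmap (eta (restr I Y)) a y) = y) /\
  (forall b z, mmap q b (mmap eps b z) = z) /\
  (forall b y, mmap eps b (mmap q b y) = y).
Proof.
have [eps [he _]] := (proj2 Hadj) (restr I Y) Y (idMM (restr I Y)).
have [q hq] := (proj2 (Hff Y (F (restr I Y)))) (eta (restr I Y)).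
exists eps, q; split; first exact: he.
split.
- move=> b z; apply: (@uniqF _ _ (compMM eps q) (idMM _)) => a x /=.
  by rewrite he hq.
- move=> b y; apply: (@proj1 _ _ (Hff Y Y) (compMM q eps) (idMM _)) => a x /=.
  by rewrite hq he.
Qed.

Lemma Feta_surj (M : Module G) b (z : mcar (F (restr I (F M))) b) :
  exists y, mmap (Fmap (eta M)) b y = z.
Proof.
have [eps [q [he [hqe heq]]]] := counit (F M).
have h1 : forall b y, mmap eps b (mmap (Fmap (eta M)) b y) = y.
  apply: (@uniqF _ _ (compMM (Fmap (eta M)) eps) (idMM _)) => a x /=.
  by rewrite natF he.
exists (mmap eps b z).
by rewrite -[RHS](hqe b z) -[LHS](hqe b) h1.
Qed.

Lemma Fmono (J M : Module G) (j : ModMor J M) :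
  (forall a, injective (mmap j a)) -> forall b, injective (mmap (Fmap j) b).
Proof.
move=> hj b.
have := Hexact (inj_coker_exact hj) b.
by case.
Qed.

Lemma ker_eta_Ker (M : Module G) : in_Ker F (kermod (eta M)).
Proof.
set K := kermod (eta M).
have h0 : forall a x, mmap (eta K) a x = 0.
  move=> a x.
  apply: (@Fmono _ _ (inclMM (@kerAct _ _ _ (eta M))) (@incl_inj _ _ _ (@kerAct _ _ _ (eta M))) (fobj I a)).
  rewrite natF mmap0 /=.
  exact: (elimT (pbP _) (sprop x)).
move=> b y.
have := @uniqF K (F K) (idMM _) (zeroMM _ _) _ b y.
apply => a x /=; exact: h0.
Qed.

Lemma coker_eta_Ker (M : Module G) : in_Ker F (coker (eta M)).
Proof.
set Im := immod (eta M).
set i := inclMM (@imAct _ _ _ (eta M)).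
set e := coresMM (@imAct _ _ _ (eta M)) (fun a x => ex_intro _ x erefl : zp (imZ (eta M) a) (mmap (eta M) a x)).
have hc : forall b w, mmap (Fmap i) b (mmap (Fmap e) b w) = mmap (Fmap (eta M)) b w.
  apply: (@uniqF _ _ (compMM (Fmap e) (Fmap i)) (Fmap (eta M))) => a x /=.
  by rewrite !natF.
have ex := Hexact (sub_quot_exact (@imAct _ _ _ (eta M))).
move=> b z.
have [_ [hs hk]] := ex b.
have [y <-] := hs z.
have [w hw] := Feta_surj y.
apply/(hk y); exists (mmap (Fmap e) b w).
by rewrite hc.
Qed.

Lemma closed_eta_bij (X : Module G) (hX : closed_wrt (in_Ker F) X) :
  (forall a, injective (mmap (eta X) a)) /\ (forall a y, exists x, mmap (eta X) a x = y).
Proof.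
have hinj : forall a, injective (mmap (eta X) a).
  move=> a x1 x2 e.
  have hz : mmap (eta X) a (x1 - x2) = 0 by rewrite mmapB e subrr.
  have := (proj1 (hX _ (@ker_eta_Ker X))) (inclMM (@kerAct _ _ _ (eta X))) a
     (SubZ (introT (pbP _) (hz : zp (kerZ (eta X) a) (x1 - x2)))).
  by move=> /= /eqP; rewrite subr_eq0 => /eqP.
split => //.
have [_ hext] := hX _ (@coker_eta_Ker X).
have [s hs] := hext _ _ _ (inj_coker_exact hinj).
have [psi [hpsi _]] := (proj2 Hadj) (coker (eta X)) (F X) s.
have hc : forall a (c : mcar (coker (eta X)) a), c = 0.
  move=> a c.
  have := hpsi a c.
  rewrite (@coker_eta_Ker X _ (mmap (eta (coker (eta X))) a c)) mmap0 => h0.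
  by rewrite -(hs a c) -h0 mmap0.
move=> a y.
have := hc a (mmap (projMM (@imAct _ _ _ (eta X))) a y).
by move/mkq_zero.
Qed.

Lemma Ker0_eta_bij (hK : forall L, in_Ker F L -> forall a (x : mcar L a), x = 0) (M : Module G) :
  (forall a, injective (mmap (eta M) a)) /\ (forall a y, exists x, mmap (eta M) a x = y).
Proof.
split.
  move=> a x1 x2 e.
  have hz : mmap (eta M) a (x1 - x2) = 0 by rewrite mmapB e subrr.
  have := hK _ (@ker_eta_Ker M) a (SubZ (introT (pbP _) (hz : zp (kerZ (eta M) a) (x1 - x2)))).
  by move/(congr1 (@sval_ _ _)) => /= /eqP; rewrite subr_eq0 => /eqP.
move=> a y.
have := hK _ (@coker_eta_Ker M) a (mmap (projMM (@imAct _ _ _ (eta M))) a y).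
by move/mkq_zero.
Qed.

Lemma Ker0 (hrep : forall g, closed_wrt (in_Ker F) (representable g)) (L : Module G)
  (hL : in_Ker F L) a (x : mcar L a) : x = 0.
Proof.
set P := representable a.
have [hPi hPs] := closed_eta_bij (hrep a).
set h := yonMM x.
set iK := inclMM (@kerAct _ _ _ h).
set jJ := inclMM (@imAct _ _ _ h).
set e := coresMM (@imAct _ _ _ h) (fun c p => ex_intro _ p erefl : zp (imZ h c) (mmap h c p)).
have hFJ : forall b (y : mcar (F (immod h)) b), y = 0.
  move=> b y; apply: (@Fmono _ _ jJ (@incl_inj _ _ _ (@imAct _ _ _ h)) b).
  by rewrite mmap0; apply: hL.
have hse : short_exact iK e.
  move=> c; split; first exact: incl_inj.
  split.
  - move=> z; have [p hp] := elimT (pbP _) (sprop z).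
    by exists p; apply: val_inj.
  - move=> y; split.
    + move=> hy.
      have hy' : mmap h c y = 0 by have := congr1 (@sval_ _ _) hy.
      by exists (SubZ (introT (pbP _) (hy' : zp (kerZ h c) y))).
    + move=> [k <-]; apply: val_inj => /=.
      exact: (elimT (pbP _) (sprop k)).
have hex := Hexact hse.
pose Sz := Szp h (eta P).
have Sact := @Szp_act _ _ I a L h _ (eta P).
have hS : forall c' (k : phom G c' a), mmap h c' k = 0 -> zp (Sz (fobj I c')) (mmap (eta P) c' k).
  move=> c' k hk c v.
  have [_ hsc] := closed_eta_bij (hrep c').
  have [g hg] := hsc c (mact (F (representable c')) v (mmap (eta (representable c')) c' (pid G c'))).
  exists (Defs.pcomp G c c' a k g); split.
  - by move: hk; rewrite /= mactM => ->; rewrite mact0.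
  - rewrite (_ : Defs.pcomp G c c' a k g = mmap (yonMM (k : mcar P c')) c g) //.
    by rewrite -natF hg mmapN natF /= pcomp1r.
pose phi := @coresRestr G V I (F P) Sz Sact (kermod h) (compMM iK (eta P))
  (fun c k => hS c (sval_ k) (elimT (pbP _) (sprop k))).
have [psi [hpsi _]] := (proj2 Hadj) (kermod h) (submod Sact) phi.
have hfac : forall b z, mmap (Fmap iK) b z = sval_ (mmap psi b z).
  apply: (@uniqF _ _ (Fmap iK) (compMM psi (inclMM Sact))) => c k /=.
  by rewrite natF hpsi.
have [_ [_ hk']] := hex (fobj I a).
have [z hz] := (proj1 (hk' (mmap (eta P) a (pid G a)))) (hFJ _ _).
have hS0 : zp (Sz (fobj I a)) (mmap (eta P) a (pid G a)).
  rewrite -hz hfac; exact: (elimT (pbP _) (sprop _)).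
have [p [hp ep]] := hS0 a (pid V (fobj I a)).
rewrite mact1 in ep.
have pE := hPi a _ _ ep.
by move: hp; rewrite pE /= mact1.
Qed.

Lemma main_sec : adj_equivalence I F eta <->
  (forall g : pobj G, closed_wrt (in_Ker F) (representable g)).
Proof.
split.
- move=> [hiso _] g L hL.
  have hz : forall a (x : mcar L a), x = 0.
    move=> a x; have [q [hq _]] := hiso L.
    by rewrite -(hq a x) (hL _ (mmap (eta L) a x)) mmap0.
  split.
  + by move=> phi a x; rewrite (hz a x) mmap0.
  + move=> E f g0 _; exists (zeroMM L E) => a x.
    by rewrite /= mmap0 (hz a x).
- move=> hrep; split.
  + move=> M; have [hi hs] := Ker0_eta_bij (Ker0 hrep) M.
    exact: bij_iso.
  + move=> Y; have [eps [q [he [h1 h2]]]] := counit Y.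
    exists eps; split => //.
    by exists q.
Qed.
End Main.

Theorem lemma3p4 (G V : PreaddCat) (I : AddFunctor G V)
    (F : Module G -> Module V)
    (Fmap : forall M N : Module G, ModMor M N -> ModMor (F M) (F N))
    (eta : forall M : Module G, ModMor M (restr I (F M)))
    (Hadj : is_left_adjoint I F Fmap eta)
    (Hexact : exact_functor F Fmap)
    (Hff : restr_fully_faithful I) :
  adj_equivalence I F eta <->
  (forall g : pobj G, closed_wrt (in_Ker F) (representable g)).
Proof. exact: (main_sec Hadj Hexact Hff). Qed.
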